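(* $\mathsf{sjfCQ}(\mathsf{TI}_{\mathsf{fin}})=\mathsf{CQ}(\mathsf{TI}_{\mathsf{fin}})=\mathsf{UCQ}(\mathsf{TI}_{\mathsf{fin}})$.
   Context: Fix a countably infinite universe $U$. A database schema is a finite nonempty set of relation symbols with arities; facts are $R(u_1,\dots,u_{\mathrm{ar}(R)})$ with $u_i\in U$; an instance is a finite set of facts; $\mathrm{adom}(D)$ is the set of elements of $U$ occurring in $D$. A probabilistic database (PDB) is a discrete probability space $(\mathbb D,P)$ with $\mathbb D$ a nonempty countable set of instances; it is finite if $\mathbb D$ is finite. A PDB is tuple-independent if for all pairwise distinct facts $f_1,\dots,f_k$, $\Pr(f_1\in I,\dots,f_k\in I)=\prod_i\Pr(f_i\in I)$; $\mathsf{TI}_{\mathsf{fin}}$ is the class of finite tuple-independent PDBs. Formulas use relational atoms $R(\bar u)$ ($\bar u$ variables or constants) and equality atoms and are evaluated under active domain semantics. A conjunctive query (CQ) is built from atoms using only $\exists,\wedge$; it is self-join free (sjfCQ) if each relation symbol occurs at most once; a union of conjunctive queries (UCQ) is built using only $\exists,\wedge,\vee$. An $\mathsf L$-view consists of one $\mathsf L$-formula $\Phi_R(x_1,\dots,x_{\mathrm{ar}(R)})$ per output relation $R$, mapping $D$ to the instance of all $R(\bar a)$ with $\bar a$ over $\mathrm{adom}(D)\cup\mathrm{adom}(\Phi_R)$ and $D\models\Phi_R[\bar a]$. The image of a PDB $(\mathbb D,P)$ under a view $V$ is the PDB on $V(\mathbb D)$ with $P'(\{D'\})=P(\{D:V(D)=D'\})$;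 $\mathsf L(\mathsf{TI}_{\mathsf{fin}})$ is the class of images of finite TI-PDBs under $\mathsf L$-views. *)

(* Defs.v *)
From HB Require Import structures.
From mathcomp Require Import all_boot all_order all_algebra.
From mathcomp Require Import finmap.
From mathcomp Require Import reals.

Set Implicit Arguments.
Unset Strict Implicit.
Unset Printing Implicit Defensive.

Import GRing.Theory Num.Theory.
Local Open Scope fset_scope.

(* The countably infinite universe U is taken to be nat. *)
Definition univ := nat.

(* A relation symbol is a pair (name, arity). *)
Definition rel := (nat * nat)%type.
Definition arity (r : rel) : nat := r.2.

Definition fact := (rel * seq univ)%type.

Definition instance := {fset fact}.

Definition schema := {fset rel}.

Definition fact_over (tau : schema) (f : fact) : bool :=
  (f.1 \in tau) && (size f.2 == arity f.1).

Definition instance_over (tau : schema) (I : instance) : bool :=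
  all (fact_over tau) I.

Definition adom (I : instance) : seq univ := flatten [seq f.2 | f <- I].

Inductive term := Var of nat | Const of univ.

Inductive formula :=
| Atom of rel & seq term
| Equal of term & term
| Exists of nat & formula
| And of formula & formula
| Or of formula & formula.

Definition term_const (t : term) : seq univ :=
  match t with Var _ => [::] | Const c => [:: c] end.

Definition term_var (t : term) : seq nat :=
  match t with Var x => [:: x] | Const _ => [::] end.

Fixpoint consts (phi : formula) : seq univ :=
  match phi with
  | Atom _ ts => flatten (map term_const ts)
  | Equal t1 t2 => term_const t1 ++ term_const t2
  | Exists _ p => consts p
  | And p q => consts p ++ consts q
  | Or p q => consts p ++ consts q
  end.

Fixpoint fv (phi : formula) : seq nat :=
  match phi with
  | Atom _ ts => flatten (map term_var ts)
  | Equal t1 t2 => term_var t1 ++ term_var t2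
  | Exists x p => filter (predC1 x) (fv p)
  | And p q => fv p ++ fv q
  | Or p q => fv p ++ fv q
  end.

Fixpoint atom_rels (phi : formula) : seq rel :=
  match phi with
  | Atom r _ => [:: r]
  | Equal _ _ => [::]
  | Exists _ p => atom_rels p
  | And p q => atom_rels p ++ atom_rels q
  | Or p q => atom_rels p ++ atom_rels q
  end.

Fixpoint has_or (phi : formula) : bool :=
  match phi with
  | Atom _ _ | Equal _ _ => false
  | Exists _ p => has_or p
  | And p q => has_or p || has_or q
  | Or _ _ => true
  end.

Fixpoint wt (tau : schema) (phi : formula) : bool :=
  match phi with
  | Atom r ts => (r \in tau) && (size ts == arity r)
  | Equal _ _ => true
  | Exists _ p => wt tau p
  | And p q => wt tau p && wt tau q
  | Or p q => wt tau p && wt tau q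
  end.

Definition teval (nu : nat -> univ) (t : term) : univ :=
  match t with Var x => nu x | Const c => c end.

Definition upd (nu : nat -> univ) (x : nat) (a : univ) : nat -> univ :=
  fun y => if y == x then a else nu y.

(* Active-domain semantics: quantifiers range over the domain A. *)
Fixpoint eval (I : instance) (A : seq univ) (nu : nat -> univ)
    (phi : formula) : bool :=
  match phi with
  | Atom r ts => (r, map (teval nu) ts) \in I
  | Equal t1 t2 => teval nu t1 == teval nu t2
  | Exists x p => has (fun a => eval I A (upd nu x a) p) A
  | And p q => eval I A nu p && eval I A nu q
  | Or p q => eval I A nu p || eval I A nu q
  end.

Inductive lang := SJFCQ | CQ | UCQ.

Definition in_lang (L : lang) (phi : formula) : bool :=
  match L with
  | SJFCQ => ~~ has_or phi && uniq (atom_rels phi)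
  | CQ => ~~ has_or phi
  | UCQ => true
  end.

(* A view: output schema, and for each output relation R a formula
   Phi_R(x_1,...,x_ar(R)) given by its list of (distinct) free-variable
   slots and its body. *)
Record view := View {
  out_schema : schema;
  vdef : rel -> (seq nat * formula)
}.

Definition view_ok (L : lang) (tau : schema) (V : view) : bool :=
  (out_schema V != fset0) &&
  all (fun R =>
         let: (xs, phi) := vdef V R in
         [&& size xs == arity R, uniq xs, all (fun y => y \in xs) (fv phi),
             wt tau phi & in_lang L phi])
      (out_schema V).

Fixpoint tuples (k : nat) (A : seq univ) : seq (seq univ) :=
  match k with
  | 0 => [:: [::]]
  | k'.+1 => [seq a :: t | a <- A, t <- tuples k' A]
  end.

Definition assign (xs : seq nat) (a : seq univ) : nat -> univ :=
  fun y => nth 0 a (index y xs).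

Definition sat_def (I : instance) (xs : seq nat) (phi : formula)
    (a : seq univ) : bool :=
  eval I (adom I ++ consts phi) (assign xs a) phi.

Definition view_app (V : view) (I : instance) : instance :=
  seq_fset tt
    (flatten [seq let: (xs, phi) := vdef V R in
                  [seq (R, a) | a <- tuples (arity R) (adom I ++ consts phi)
                              & sat_def I xs phi a]
             | R <- out_schema V]).

(* A (finite) probabilistic database: schema, finite nonempty sample space
   of instances, and point probabilities P({D}) for D in the sample space. *)
Record pdb (R : realType) := PDB {
  psch : schema;
  pdom : {fset instance};
  pprob : instance -> R
}.

Section PDB.
Variable R : realType.
Local Open Scope ring_scope.

Definition pdb_ok (Q : pdb R) : bool :=
  [&& psch Q != fset0, pdom Q != fset0,
      all (instance_over (psch Q)) (pdom Q),
      all (fun I => 0 <= pprob Q I) (pdom Q) &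
      \sum_(I <- pdom Q) pprob Q I == 1].

Definition prob_all (Q : pdb R) (F : {fset fact}) : R :=
  \sum_(I <- pdom Q | F `<=` I) pprob Q I.

Definition tuple_independent (Q : pdb R) : Prop :=
  forall F : {fset fact},
    prob_all Q F = \prod_(f <- F) prob_all Q [fset f].

Definition TIfin (Q : pdb R) : Prop := pdb_ok Q /\ tuple_independent Q.

Definition image (V : view) (Q : pdb R) : pdb R :=
  PDB (out_schema V) [fset view_app V I | I in pdom Q]
      (fun J => \sum_(I <- pdom Q | view_app V I == J) pprob Q I).

Definition pdb_eq (Q1 Q2 : pdb R) : Prop :=
  [/\ psch Q1 = psch Q2, pdom Q1 = pdom Q2 &
      forall I, I \in pdom Q1 -> pprob Q1 I = pprob Q2 I].

Definition in_L_TIfin (L : lang) (Q : pdb R) : Prop :=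
  exists (T : pdb R) (V : view),
    TIfin T /\ view_ok L (psch T) V /\ pdb_eq (image V T) Q.

End PDB.

(* Main.v *)
Require Import Defs.
From HB Require Import structures.
From mathcomp Require Import all_boot all_order all_algebra finmap reals.
From mathcomp Require Import zify.
Set Implicit Arguments. Unset Strict Implicit. Unset Printing Implicit Defensive.
Import GRing.Theory Num.Theory.

Section FileA.
Local Open Scope fset_scope.

Lemma mem_tuples k A t : (t \in tuples k A) = (size t == k) && all (mem A) t.
Proof.
elim: k t => [|k IH] [|a t] //=.
- apply/allpairsP => -[[x y] /= [_ _]] //.
- rewrite eqSS; apply/allpairsP/idP => [[[x y] /= [xA yT [-> ->]]]|].
    by move: yT; rewrite IH xA => /andP[-> ->].
  by case/andP => sz /andP[aA tA]; exists (a, t); rewrite /= aA IH sz tA.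
Qed.

Lemma mem_adom (I : instance) f u : f \in I -> u \in f.2 -> u \in adom I.
Proof. by move=> fI uf; apply/flattenP; exists f.2 => //; apply/mapP; exists f. Qed.

Lemma adomP (I : instance) u : reflect (exists2 f, f \in I & u \in f.2) (u \in adom I).
Proof.
apply: (iffP flattenP) => [[s /mapP[f fI ->] us]|[f fI uf]]; first by exists f.
by exists f.2 => //; apply/mapP; exists f.
Qed.

Lemma eval_mono (I J : instance) (A B : seq univ) phi nu :
  {subset I <= J} -> {subset A <= B} -> eval I A nu phi -> eval J B nu phi.
Proof.
move=> IJ AB; elim: phi nu => [r ts|t1 t2|x p IH|p IHp q IHq|p IHp q IHq] nu //=.
- exact: IJ.
- by case/hasP => a aA h; apply/hasP; exists a; [exact: AB| exact: IH].
- by case/andP => /IHp -> /IHq ->.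
- by case/orP => [/IHp ->|/IHq ->]; rewrite ?orbT.
Qed.

Lemma mem_view_app V I g :
  (g \in view_app V I) =
  (g.1 \in out_schema V) &&
  (let: (xs, phi) := vdef V g.1 in
   (g.2 \in tuples (arity g.1) (adom I ++ consts phi)) && sat_def I xs phi g.2).
Proof.
rewrite /view_app seq_fsetE; apply/flattenP/idP.
- case=> s /mapP[R RV ->]; case E: (vdef V R) => [xs phi].
  case/mapP => a; rewrite mem_filter => /andP[sa ta] ->; by rewrite /= RV E ta sa.
- case: g => R a /=; case/andP => RV; case E: (vdef V R) => [xs phi] /andP[ta sa].
  exists (let: (xs, phi) := vdef V R in
          [seq (R, a) | a <- tuples (arity R) (adom I ++ consts phi) & sat_def I xs phi a]).
    by apply/mapP; exists R.
  by rewrite E; apply/mapP; exists a; rewrite // mem_filter sa ta.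
Qed.

Lemma view_app_mono V (C I : instance) g :
  {subset C <= I} -> g \in view_app V C -> g \in view_app V I.
Proof.
move=> CI; rewrite !mem_view_app => /andP[-> /=]; case: (vdef V g.1) => xs phi.
have sub : {subset adom C ++ consts phi <= adom I ++ consts phi}.
  move=> u; rewrite !mem_cat => /orP[/adomP[f fC uf]|->]; last by rewrite orbT.
  by rewrite (mem_adom (CI _ fC) uf).
rewrite !mem_tuples => /andP[/andP[-> /allP ta] sa] /=.
apply/andP; split; first by apply/allP => u /ta; apply: sub.
exact: (eval_mono CI sub sa).
Qed.

End FileA.
Section FileB.
Local Open Scope fset_scope.
Local Open Scope ring_scope.

Lemma push_sum (R : realType) (s : {fset instance}) (e : instance -> instance)
  (p : instance -> R) (P : pred instance) :
  \sum_(J <- [fset e I | I in s] | P J) \sum_(I <- s | e I == J) p I =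
  \sum_(I <- s | P (e I)) p I.
Proof.
rewrite big_mkcond (eq_bigr (fun J => \sum_(I <- s) (if P J && (e I == J) then p I else 0))); last first.
  by move=> J _; case: (P J); [rewrite big_mkcond | rewrite big1].
rewrite exchange_big [RHS]big_mkcond; apply: eq_big_seq => I Is /=.
rewrite (bigD1_seq (e I)) ?fset_uniq ?in_imfset //= eqxx andbT.
rewrite big1 ?addr0 // => J /negbTE neq; rewrite eq_sym neq andbF //.
Qed.

End FileB.
Section FileC.
Local Open Scope fset_scope.

Fixpoint updl (nu : nat -> univ) (xs : seq nat) (ws : seq univ) :=
  match xs, ws with
  | x :: xs', w :: ws' => updl (upd nu x w) xs' ws'
  | _, _ => nu
  end.

Lemma eval_exs I A nu xs p :
  eval I A nu (foldr Exists p xs) <->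
  exists ws, [/\ size ws = size xs, all (mem A) ws & eval I A (updl nu xs ws) p].
Proof.
elim: xs nu => [|x xs IH] nu /=.
  by split => [h|[[|w ws] [] //]]; exists [::].
split.
- case/hasP => a aA /IH [ws [sz all_ws ev]].
  by exists (a :: ws); rewrite /= sz aA all_ws.
- case=> -[|w ws] [] //= [sz] /andP[wA wsA] ev.
  by apply/hasP; exists w => //; apply/IH; exists ws.
Qed.

Lemma updl_val nu xs ws y : uniq xs -> size ws = size xs ->
  updl nu xs ws y = if y \in xs then nth 0 ws (index y xs) else nu y.
Proof.
elim: xs ws nu => [|x xs IH] [|w ws] nu //= /andP[xxs uxs] [sz].
rewrite IH // in_cons /upd; case: (y =P x) => [->|neq] /=.
  by rewrite (negbTE xxs) eqxx.
by case: ifP => //; rewrite eq_sym; move/eqP: neq => /negbTE ->.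
Qed.

Lemma eval_conj I A nu (a : nat -> formula) base l :
  eval I A nu (foldr (fun i acc => And (a i) acc) base l) =
  all (fun i => eval I A nu (a i)) l && eval I A nu base.
Proof. by elim: l => //= i l ->; rewrite andbA. Qed.

Lemma consts_exs p xs : consts (foldr Exists p xs) = consts p.
Proof. by elim: xs. Qed.

Lemma fv_exs p xs y : y \in fv (foldr Exists p xs) -> (y \in fv p) && (y \notin xs).
Proof.
elim: xs => [|x xs IH] /=; first by move=> ->.
rewrite mem_filter /= => /andP[yx /IH /andP[yp yxs]]; by rewrite in_cons yp negb_or yx yxs.
Qed.

Lemma consts_vars s : flatten (map term_const (map Var s)) = [::].
Proof. by elim: s. Qed.

Lemma fv_vars s : flatten (map term_var (map Var s)) = s.
Proof. by elim: s => //= x s ->. Qed.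

Lemma updl_at (a z : seq univ) n k i : size z = k -> i < k ->
  updl (assign (iota 0 n) a) (iota n k) z (n + i) = nth 0 z i.
Proof.
move=> sz ik; rewrite updl_val ?iota_uniq ?size_iota // mem_iota leq_addr ltn_add2l ik /=.
by rewrite -{1}(nth_iota 0 n ik) index_uniq ?size_iota ?iota_uniq.
Qed.

Lemma map_assign_upd (a z : seq univ) n k :
  size a = n -> size z = k ->
  map (updl (assign (iota 0 n) a) (iota n k) z) (iota 0 (n + k)) = a ++ z.
Proof.
move=> sa sz; rewrite iotaD map_cat add0n; congr (_ ++ _).
  rewrite -[RHS](mkseq_nth 0 a) /mkseq sa; apply/eq_in_map => y.
  rewrite mem_iota add0n => /andP[_ yn].
  rewrite updl_val ?iota_uniq ?size_iota // mem_iota leqNgt yn /=.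
  rewrite /assign; have e := nth_iota 0 0 yn; rewrite add0n in e.
  by rewrite -{1}e index_uniq ?size_iota ?iota_uniq.
rewrite -[RHS](mkseq_nth 0 z) /mkseq sz.
apply: (@eq_from_nth _ 0); rewrite ?size_map ?size_iota // => i ik.
by rewrite (nth_map 0) ?size_iota // nth_iota // (nth_map 0) ?size_iota// nth_iota // add0n updl_at.
Qed.


End FileC.
Section FileD.
Local Open Scope fset_scope.

Section Constr.
Variables (P : {fset instance}) (V : view).

Definition Fs : seq fact := undup (flatten (map (fun X : instance => enum_fset X) P)).
Definition kk := size Fs.
Definition f0 : fact := ((0%N, 0%N), [::]).
Definition Mr (R : Defs.rel) : Defs.rel := ((choice.pickle (R : nat * nat)).*2.+1, (arity R + kk)%N).
Definition Sr (f : fact) : Defs.rel := ((choice.pickle (f : (nat * nat) * seq nat)).*2, 1%N).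
Definition hf (f : fact) : fact := (Sr f, [:: 1%N]).
Definition zpat (C : instance) : seq univ := [seq nat_of_bool (f \in C) | f <- Fs].
Definition Mfacts : seq fact :=
  flatten [seq [seq (Mr g.1, g.2 ++ zpat C) | g <- enum_fset (view_app V C)] | C <- P].
Definition S0facts : seq fact := [seq (Sr f, [:: 0%N]) | f <- Fs].
Definition Base : instance := seq_fset tt (Mfacts ++ S0facts).
Definition enc (X : instance) : instance := Base `|` [fset hf f | f in X].

Definition body (R : Defs.rel) : formula :=
  foldr (fun i acc => And (Atom (Sr (nth f0 Fs i)) [:: Var (arity R + i)]) acc)
        (Atom (Mr R) (map Var (iota 0 (arity R + kk)))) (iota 0 kk).
Definition phiR (R : Defs.rel) : formula := foldr Exists (body R) (iota (arity R) kk).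
Definition V' : view := View (out_schema V) (fun R => (iota 0 (arity R), phiR R)).

Lemma consts_phiR R : consts (phiR R) = [::].
Proof.
rewrite /phiR consts_exs /body; elim: (iota 0 kk) => [|i l IH] /=; first exact: consts_vars.
by rewrite IH.
Qed.

Lemma sat_char (J : instance) R a : size a = arity R ->
  sat_def J (iota 0 (arity R)) (phiR R) a <->
  exists z, [/\ size z = kk, all (mem (adom J)) z, (Mr R, a ++ z) \in J &
     forall i, i < kk -> (Sr (nth f0 Fs i), [:: nth 0%N z i]) \in J].
Proof.
move=> sa; rewrite /sat_def consts_phiR cats0 /phiR eval_exs size_iota.
split=> [[z [sz zA ev]]|[z [sz zA ev p]]]; exists z; split => //.
- move: ev; rewrite /body eval_conj => /andP[_] /=.
  by rewrite -map_comp /= map_assign_upd.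
- move=> i ik; move: ev; rewrite /body eval_conj => /andP[/allP /(_ i)] /=.
  rewrite mem_iota add0n ik /= => /(_ isT); rewrite updl_at //. 
- rewrite /body eval_conj /= -map_comp /= map_assign_upd // ev andbT.
  apply/allP => i; rewrite mem_iota add0n => /andP[_ ik] /=.
  by rewrite updl_at // p.
Qed.


Lemma Mr_inj : injective Mr.
Proof.
by move=> R1 R2 [] /double_inj /(pcan_inj choice.pickleK).
Qed.

Lemma Sr_inj : injective Sr.
Proof.
by move=> f1 f2 [] /double_inj /(pcan_inj choice.pickleK).
Qed.

Lemma Mr_odd R : odd (Mr R).1. Proof. by rewrite /= odd_double. Qed.
Lemma Sr_odd f : ~~ odd (Sr f).1. Proof. by rewrite /= odd_double. Qed.

Lemma size_view_app W C g : g \in view_app W C -> size g.2 = arity g.1.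
Proof.
rewrite mem_view_app => /andP[_]; case: (vdef W g.1) => xs phi.
by rewrite mem_tuples => /andP[/andP[/eqP -> _] _].
Qed.

Lemma in_Fs f : reflect (exists2 X, X \in P & f \in X) (f \in Fs).
Proof.
rewrite /Fs mem_undup; apply: (iffP flattenP) => [[s sP fX]|[X XP fX]].
  by case/mapP: sP fX => X XP ->; exists X.
by exists (enum_fset X) => //; apply/mapP; exists X.
Qed.

Lemma in_enc x X : (x \in enc X) =
  [|| x \in Mfacts, x \in S0facts | x \in [fset hf f | f in X]].
Proof. by rewrite in_fsetU seq_fsetE mem_cat orbA. Qed.

Lemma Mfacts_odd x : x \in Mfacts -> odd x.1.1.
Proof.
case/flattenP => s /mapP[C _ ->] /mapP[g _ ->]; exact: Mr_odd.
Qed.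

Lemma in_enc_M X R b : size b >= arity R ->
  ((Mr R, b) \in enc X) <->
  exists C, [/\ C \in P, (R, take (arity R) b) \in view_app V C &
                 drop (arity R) b = zpat C].
Proof.
move=> sb; rewrite in_enc; split.
- case/or3P => [|hS|hH]; last 2 first.
  + case/mapP: hS => f _ [e _]; by move: e => /(congr1 odd); rewrite /= !odd_double.
  + case/imfsetP: hH => f _ [e _]; by move: e => /(congr1 odd); rewrite /= !odd_double.
  case/flattenP => s /mapP[C CP ->] /mapP[[R' a'] gV e].
  have eR' : R = R' := Mr_inj (congr1 fst e).
  have eb : b = a' ++ zpat C := congr1 snd e.
  subst R'; exists C; have sa := size_view_app gV; rewrite /= in sa.
  by rewrite eb take_size_cat // drop_size_cat.
- case=> C [CP gV db]; apply/or3P; apply: Or31; apply/flattenP.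
  eexists; first by apply/mapP; exists C.
  apply/mapP; exists (R, take (arity R) b) => //=.
  by rewrite -db cat_take_drop.
Qed.

Lemma in_enc_S X f u :
  ((Sr f, [:: u]) \in enc X) = ((u == 0%N) && (f \in Fs)) || ((u == 1%N) && (f \in X)).
Proof.
rewrite in_enc; apply/or3P/orP.
- case.
  + by move/Mfacts_odd; rewrite (negbTE (Sr_odd f)).
  + case/mapP => g gF e; have eS : f = g := Sr_inj (congr1 fst e).
    have [->] : [:: u] = [:: 0%N] := congr1 snd e; by left; rewrite eS eqxx gF.
  + case/imfsetP => g gX e; have eS : f = g := Sr_inj (congr1 fst e).
    have [->] : [:: u] = [:: 1%N] := congr1 snd e; by right; rewrite eS eqxx gX.
- case=> /andP[/eqP -> fin].
  + by apply: Or32; apply/mapP; exists f.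
  + by apply: Or33; apply/imfsetP; exists f.
Qed.

Lemma nth_zpat C i : i < kk -> nth 0%N (zpat C) i = nat_of_bool (nth f0 Fs i \in C).
Proof. by move=> ik; rewrite /zpat (nth_map f0). Qed.

Lemma S_in_enc X i : i < kk -> (Sr (nth f0 Fs i), [:: nth 0%N (zpat X) i]) \in enc X.
Proof.
move=> ik; rewrite nth_zpat // in_enc_S; case: (nth f0 Fs i \in X) => //=.
by rewrite mem_nth.
Qed.

Lemma view_enc X : X \in P -> view_app V' (enc X) = view_app V X.
Proof.
move=> XP; apply/fsetP => -[R a]; rewrite mem_view_app /=.
case RV: (R \in out_schema V); last by apply/esym/negbTE; rewrite mem_view_app RV.
rewrite /=; apply/idP/idP.
- case/andP => ta sa; move: ta; rewrite consts_phiR cats0 mem_tuples => /andP[/eqP sza _].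
  case/(sat_char _ sza): sa => z [sz _ hM hS].
  have := hM; rewrite in_enc_M ?size_cat ?sza ?leq_addr //.
  rewrite -sza take_size_cat // drop_size_cat // => -[C [CP gV ez]].
  have CX : {subset C <= X}.
    move=> f fC; have fF : f \in Fs by apply/in_Fs; exists C.
    have ik : index f Fs < kk by rewrite index_mem.
    have := hS _ ik; rewrite nth_index // ez nth_zpat // nth_index // fC in_enc_S /=.
    by [].
  exact: view_app_mono CX gV.
- move=> gV.
  have sza := size_view_app gV; rewrite /= in sza.
  have hM : (Mr R, a ++ zpat X) \in enc X.
    apply/in_enc_M; first by rewrite size_cat sza leq_addr.
    by exists X; rewrite -sza take_size_cat // drop_size_cat.
  apply/andP; split.
    rewrite consts_phiR cats0 mem_tuples sza eqxx /=; apply/allP => u ua.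
    by apply: (mem_adom hM); rewrite /= mem_cat ua.
  apply/(sat_char _ sza); exists (zpat X); split => //.
  - by rewrite size_map.
  - apply/allP => u /(nthP 0%N) [i]; rewrite size_map => ik <-.
    by apply: (mem_adom (S_in_enc X ik)); rewrite mem_head.
  - by move=> i ik; apply: S_in_enc.
Qed.

End Constr.

End FileD.
Section FileE.
Local Open Scope fset_scope.

Definition hinv (x : fact) : option fact :=
  if @choice.unpickle ((nat * nat) * seq nat)%type (x.1.1./2) is Some f then
    (if x == hf f then Some f else None) else None.

Lemma hinvK f : hinv (hf f) = Some f.
Proof. by rewrite /hinv /= doubleK choice.pickleK eqxx. Qed.

Lemma hinvS x f : hinv x = Some f -> x = hf f.
Proof.
rewrite /hinv; case: choice.unpickle => // g; case: eqP => // -> [->] //.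
Qed.

Lemma hf_inj : injective hf.
Proof. by move=> f g e; have := hinvK f; rewrite e hinvK => -[]. Qed.

Section Prob.
Variables (R : realType) (T : pdb R) (V : view).
Local Open Scope ring_scope.
Notation P := (pdom T).
Notation Base := (Base P V).
Notation encP := (enc P V).

Definition psch' : schema := [fset Mr P R | R in out_schema V] `|` [fset Sr f | f in Fs P].
Definition T' : pdb R :=
  PDB psch' [fset encP X | X in P] (fun J => \sum_(X <- P | encP X == J) pprob T X).

Lemma in_Base x : (x \in Base) = (x \in Mfacts P V) || (x \in S0facts P).
Proof. by rewrite seq_fsetE mem_cat. Qed.

Lemma hf_notin_Base f : hf f \notin Base.
Proof.
rewrite in_Base negb_or; apply/andP; split.
  by apply/negP => /Mfacts_odd; rewrite /= odd_double.
by apply/negP => /mapP[g _ [_]].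
Qed.

Lemma Base_enc x X : x \in Base -> x \in encP X.
Proof. by rewrite /enc in_fsetU => ->. Qed.

Lemma hinv_enc x f X : hinv x = Some f -> (x \in encP X) = (f \in X).
Proof.
move/hinvS => ->; rewrite /enc in_fsetU (negbTE (hf_notin_Base f)) /=.
by rewrite mem_imfset //; apply: hf_inj.
Qed.

Lemma dead_enc x X : x \notin Base -> hinv x = None -> x \notin encP X.
Proof.
move=> xB hx; rewrite /enc in_fsetU (negbTE xB) /=.
by apply/imfsetP => -[f _ e]; move: hx; rewrite e hinvK.
Qed.

Lemma sumT' (Pr : pred instance) :
  \sum_(J <- pdom T' | Pr J) pprob T' J = \sum_(X <- P | Pr (encP X)) pprob T X.
Proof. exact: push_sum. Qed.

Lemma prod_pmap (g : fact -> R) s :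
  \prod_(x <- s) oapp g 1 (hinv x) = \prod_(f <- pmap hinv s) g f.
Proof.
elim: s => [|x s IH]; first by rewrite !big_nil.
by rewrite big_cons /=; case: (hinv x) => [f|] /=; rewrite ?big_cons IH ?mul1r.
Qed.

Lemma TI_T' : TIfin T -> tuple_independent T'.
Proof.
case=> /and5P[_ _ _ _ /eqP sum1] TI F'.
rewrite /prob_all sumT'.
have pi'E x : \sum_(J <- pdom T' | [fset x] `<=` J) pprob T' J =
              \sum_(X <- P | x \in encP X) pprob T X.
  by rewrite sumT'; apply: eq_bigl => X; rewrite fsub1set.
under [RHS]eq_bigr do rewrite pi'E.
case: (boolP (has (fun x => (x \notin Base) && (hinv x == None)) F')).
- case/hasP => x xF /andP[xB /eqP hx].
  have z : forall X, (x \in encP X) = false by move=> X; apply/negbTE/dead_enc.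
  rewrite [LHS]big_hasC; last first.
    by apply/hasPn => X _; apply/negP => /fsubsetP sub; have := sub x xF; rewrite z.
  rewrite (bigD1_seq x) ?fset_uniq //= big_hasC ?mul0r //.
  by apply/hasPn => X _; rewrite z.
- move/hasPn => alive.
  pose G : {fset fact} := seq_fset tt (pmap hinv F').
  have GE X : (F' `<=` encP X) = (G `<=` X).
    apply/fsubsetP/fsubsetP => sub.
    + move=> f; rewrite seq_fsetE mem_pmap => /mapP[x xF hx].
      by rewrite -(hinv_enc X (esym hx)); apply: sub.
    + move=> x xF; case: (boolP (x \in Base)) => [xB|xB]; first exact: Base_enc.
      have := alive x xF; rewrite xB /=; case hx: (hinv x) => [f|] //= _.
      rewrite (hinv_enc X hx); apply: sub.
      by rewrite seq_fsetE mem_pmap -hx map_f.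
  rewrite [LHS](eq_bigl (fun X => G `<=` X)); last by move=> X; rewrite GE.
  have := TI G; rewrite /prob_all => ->.
  have -> : \prod_(x <- F') \sum_(X <- P | x \in encP X) pprob T X =
            \prod_(x <- F') oapp (fun f => prob_all T [fset f]) 1 (hinv x).
    apply: eq_big_seq => x xF; case hx: (hinv x) => [f|] /=.
      by rewrite /prob_all; apply: eq_bigl => X; rewrite fsub1set (hinv_enc X hx).
    have xB : x \in Base by have := alive x xF; rewrite hx eqxx andbT negbK.
    by rewrite -sum1; apply: eq_bigl => X; rewrite Base_enc.
  rewrite prod_pmap; apply: perm_big.
  rewrite (perm_trans (seq_fset_perm _ _)) // undup_id //.
  apply: pmap_uniq; last exact: fset_uniq.
  by move=> x; case hx: (hinv x) => [f|] //=; rewrite (hinvS hx).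
Qed.

End Prob.

End FileE.
Section FileF.
Local Open Scope fset_scope.

Section Final.
Variables (R : realType) (T : pdb R) (V : view).
Local Open Scope ring_scope.
Notation P := (pdom T).

Lemma pdb_ok_T' : pdb_ok T -> out_schema V != fset0 -> pdb_ok (T' T V).
Proof.
case/and5P => _ /fset0Pn [X0 X0P] _ /allP ge0 /eqP sum1 /fset0Pn [R0 R0V].
apply/and5P; split.
- apply/fset0Pn; exists (Mr P R0); rewrite in_fsetU; apply/orP; left.
  exact: in_imfset.
- by apply/fset0Pn; exists (enc P V X0); apply: in_imfset.
- apply/allP => J /imfsetP [X XP ->]; apply/allP => x.
  rewrite in_enc => /or3P [|/mapP[f fF ->]|/imfsetP[f fX ->]]; rewrite /fact_over.
  + case/flattenP => s /mapP[C CP ->] /mapP[g gV ->] /=.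
    have := gV; rewrite mem_view_app => /andP[gO _].
    rewrite size_cat (size_view_app gV) size_map eqxx andbT in_fsetU.
    by rewrite in_imfset.
  + by rewrite in_fsetU [X in _ || X]in_imfset ?orbT.
  + have fF : f \in Fs P by apply/in_Fs; exists X.
    by rewrite in_fsetU [X in _ || X]in_imfset ?orbT.
- apply/allP => J _; rewrite /T' /= big_seq_cond; apply: sumr_ge0 => X /andP[XP _]; exact: ge0.
- by rewrite (sumT' T V xpredT) sum1.
Qed.

Lemma exs_props tau p xs :
  [/\ wt tau (foldr Exists p xs) = wt tau p, has_or (foldr Exists p xs) = has_or p
    & atom_rels (foldr Exists p xs) = atom_rels p].
Proof. by elim: xs => //= x xs [-> -> ->]. Qed.

Lemma conj_props tau (a : nat -> formula) base l :
  let c := foldr (fun i acc => And (a i) acc) base l in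
  [/\ wt tau c = all (fun i => wt tau (a i)) l && wt tau base,
      has_or c = has (fun i => has_or (a i)) l || has_or base,
      atom_rels c = flatten (map (fun i => atom_rels (a i)) l) ++ atom_rels base &
      forall y, y \in fv c -> (y \in fv base) || has (fun i => y \in fv (a i)) l].
Proof.
elim: l => [|i l [IH1 IH2 IH3 IH4]] /=; first by split => // y ->.
rewrite IH1 IH2 IH3 andbA orbA catA; split => // y; rewrite mem_cat => /orP[->|/IH4].
  by rewrite orbT.
by case/orP => ->; rewrite ?orbT.
Qed.

Lemma view_ok_V' : out_schema V != fset0 -> view_ok SJFCQ (psch' T V) (V' P V).
Proof.
move=> ne; apply/andP; split => //; apply/allP => Rl RV /=.
have [w1 h1 a1] := exs_props (psch' T V) (body P Rl) (iota (arity Rl) (kk P)).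
have [w2 h2 a2 f2] := conj_props (psch' T V)
   (fun i => Atom (Sr (nth f0 (Fs P) i)) [:: Var (arity Rl + i)])
   (Atom (Mr P Rl) (map Var (iota 0 (arity Rl + kk P)))) (iota 0 (kk P)).
rewrite /phiR; apply/and5P; split.
- by rewrite size_iota.
- exact: iota_uniq.
- apply/allP => y /fv_exs /andP[/f2 yb yn].
  have : y \in iota 0 (arity Rl + kk P).
    case/orP: yb => /=; first by rewrite fv_vars.
    case/hasP => i; rewrite mem_iota !inE add0n => /andP[_ ik] /eqP ->.
    by rewrite mem_iota add0n ltn_add2l ik.
  move: yn; rewrite !mem_iota; lia.

- rewrite w1 /body w2 /= size_map size_iota eqxx.
  apply/and3P; split => //; last by rewrite in_fsetU in_imfset.
  apply/allP => i; rewrite mem_iota add0n => /andP[_ ik]; rewrite andbT.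
  rewrite in_fsetU [X in _ || X]in_imfset ?orbT //; exact: mem_nth.
- rewrite /in_lang h1 /body h2 /= orbF a1 a2 /=.
  apply/andP; split; first by apply/hasPn => i.
  have -> : flatten [seq [:: Sr (nth f0 (Fs P) i)] | i <- iota 0 (kk P)] = map Sr (Fs P).
    rewrite -[in RHS](mkseq_nth f0 (Fs P)) /mkseq -map_comp.
    by elim: (iota 0 (kk P)) => //= i l ->.
  rewrite cat_uniq /= andbT (map_inj_uniq (@Sr_inj)) undup_uniq /= orbF.
  by apply/mapP => -[f _ /(congr1 (fun r => odd r.1))]; rewrite /= !odd_double.
Qed.

End Final.

End FileF.
Local Open Scope fset_scope.

Lemma pdb_eq_trans (R : realType) (Q1 Q2 Q3 : pdb R) :
  pdb_eq Q1 Q2 -> pdb_eq Q2 Q3 -> pdb_eq Q1 Q3.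
Proof.
case=> s12 d12 p12 [s23 d23 p23]; split; first by rewrite s12.
  by rewrite d12.
by move=> I I1; rewrite p12 // p23 // -d12.
Qed.

Lemma image_V' (R : realType) (T : pdb R) (V : view) :
  pdb_eq (Defs.image (V' (pdom T) V) (T' T V)) (Defs.image V T).
Proof.
split => //=.
- apply/fsetP => y; apply/imfsetP/imfsetP.
  + case=> J /imfsetP[X XP ->] ->; exists X => //; exact: view_enc.
  + case=> X XP ->; exists (enc (pdom T) V X); first exact: in_imfset.
    by rewrite view_enc.
- move=> J0 _; rewrite (sumT' T V (fun J => view_app (V' (pdom T) V) J == J0)).
  rewrite big_seq_cond [RHS]big_seq_cond; apply: eq_bigl => X.
  by case XP: (X \in pdom T) => //=; rewrite view_enc.
Qed.

Lemma ucq_sjf (R : realType) (Q : pdb R) : in_L_TIfin UCQ Q -> in_L_TIfin SJFCQ Q.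
Proof.
case=> T [V [[okT TI] [vok eq]]].
have ne : out_schema V != fset0 by case/andP: vok.
exists (T' T V), (V' (pdom T) V); split; first split.
- exact: pdb_ok_T'.
- exact: TI_T'.
split; first exact: view_ok_V'.
exact: pdb_eq_trans (image_V' T V) eq.
Qed.

Lemma lang_mono (R : realType) (L1 L2 : lang) (Q : pdb R) :
  (forall phi, in_lang L1 phi -> in_lang L2 phi) -> in_L_TIfin L1 Q -> in_L_TIfin L2 Q.
Proof.
move=> m [T [V [tT [vok eq]]]]; exists T, V; split => //; split => //.
case/andP: vok => ne /allP h; apply/andP; split => //; apply/allP => Rl RV.
move: (h Rl RV); case: (vdef V Rl) => xs phi /and5P[a b c d e].
by apply/and5P; split => //; apply: m.
Qed.

Theorem corollary7p4 (R : realType) (Q : pdb R) :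
  (in_L_TIfin SJFCQ Q <-> in_L_TIfin CQ Q) /\
  (in_L_TIfin CQ Q <-> in_L_TIfin UCQ Q).
Proof.
have s2c : forall phi, in_lang SJFCQ phi -> in_lang CQ phi by move=> phi /andP[].
have c2u : forall phi, in_lang CQ phi -> in_lang UCQ phi by [].
split; split.
- exact: lang_mono s2c.
- by move=> h; apply: ucq_sjf; apply: lang_mono c2u h.
- exact: lang_mono c2u.
- by move=> h; apply: lang_mono s2c (ucq_sjf h).
Qed.
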